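(* Let $\lambda>0$ and let $f$ be a bounded, non-constant function belonging to $\mathcal B_{\lambda}$. For $x,y>0$ let $dP_{y,x}$ be the gamma distribution on $(0,\infty)$ with density $\frac{1}{\Gamma(y)}(y/x)^y t^{y-1}e^{-ty/x}$ with respect to Lebesgue measure, and let $g_\lambda(y)=\frac{y^{\lambda}\Gamma(y)}{\Gamma(\lambda+y)}$. (i) If $\lambda\le 1$, then for all $x,y>0$, $$\int_0^\infty f(t)\,dP_{y,x}(t)<f(x).$$ (ii) If $\lambda>1$, then for all $x,y>0$, $$g_\lambda(y)\int_0^\infty f(t)\,dP_{y,x}(t)<f(x).$$
   Context: For $\lambda>0$, $\mathcal B_\lambda$ (generalized Bernstein functions of order $\lambda$) is the class of non-negative functions $f$ on $(0,\infty)$ having derivatives of all orders such that $x\mapsto f'(x)x^{1-\lambda}$ is completely monotonic on $(0,\infty)$. *)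

(* Defs.v *)
From Stdlib Require Import Reals.
From Coquelicot Require Import Coquelicot.
Open Scope R_scope.

Definition completely_monotonic (h : R -> R) : Prop :=
  forall (n : nat) (x : R), 0 < x ->
    ex_derive_n h n x /\ 0 <= (-1) ^ n * Derive_n h n x.

Definition gen_Bernstein (lambda : R) (f : R -> R) : Prop :=
  (forall x, 0 < x -> 0 <= f x) /\
  (forall (n : nat) (x : R), 0 < x -> ex_derive_n f n x) /\
  completely_monotonic (fun x => Derive f x * Rpower x (1 - lambda)).

Definition Gamma (y : R) : R :=
  RInt_gen (fun t => Rpower t (y - 1) * exp (- t))
           (at_right 0) (Rbar_locally p_infty).

Definition gamma_density (y x t : R) : R :=
  / Gamma y * Rpower (y / x) y * Rpower t (y - 1) * exp (- (t * y / x)).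

Definition gamma_expect (f : R -> R) (y x : R) : R :=
  RInt_gen (fun t => f t * gamma_density y x t)
           (at_right 0) (Rbar_locally p_infty).

Definition g_lambda (lambda y : R) : R :=
  Rpower y lambda * Gamma y / Gamma (lambda + y).

(* Main.v *)
Require Import Defs.
From Stdlib Require Import Reals Lra Classical.
From Coquelicot Require Import Coquelicot.
Open Scope R_scope.

Lemma Rpow_pos x e : 0 < Rpower x e.
Proof. unfold Rpower; apply exp_pos. Qed.

Lemma Rpower_deriv x e : 0 < x -> is_derive (fun t => Rpower t e) x (e * Rpower x (e-1)).
Proof. intros; apply is_derive_Reals, derivable_pt_lim_power; auto. Qed.

Definition Der (f : R -> R) := forall t, 0 < t -> ex_derive f t.

Lemma Der_Rpower e : Der (fun t => Rpower t e).
Proof. intros t Ht; eexists; apply Rpower_deriv; auto. Qed.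
Lemma Der_mult f g : Der f -> Der g -> Der (fun t => f t * g t).
Proof. intros Hf Hg t Ht; apply ex_derive_mult; auto. Qed.
Lemma Der_plus f g : Der f -> Der g -> Der (fun t => f t + g t).
Proof. intros Hf Hg t Ht; apply (ex_derive_plus f g); auto. Qed.
Lemma Der_minus f g : Der f -> Der g -> Der (fun t => f t - g t).
Proof. intros Hf Hg t Ht; apply (ex_derive_minus f g); auto. Qed.
Lemma Der_const c : Der (fun _ => c).
Proof. intros t Ht; apply ex_derive_const. Qed.
Lemma Der_id : Der (fun t => t).
Proof. intros t Ht; apply ex_derive_id. Qed.
Lemma Der_explin k : Der (fun t => exp (- (t * k))).
Proof. intros t Ht; auto_derive; auto. Qed.

Lemma Der_cont f t : Der f -> 0 < t -> continuous f t.
Proof. intros H Ht; apply (@ex_derive_continuous R_AbsRing R_NormedModule); auto. Qed.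

Lemma Der_exRInt f a b : Der f -> 0 < a -> a <= b -> ex_RInt f a b.
Proof.
  intros H Ha Hab; apply (@ex_RInt_continuous R_CompleteNormedModule); intros z Hz.
  rewrite Rmin_left in Hz by lra; rewrite Rmax_right in Hz by lra.
  apply Der_cont; auto; lra.
Qed.

Lemma mvt_le (phi dphi : R -> R) a b : a <= b ->
  (forall t, a <= t <= b -> is_derive phi t (dphi t)) ->
  (forall t, a <= t <= b -> 0 <= dphi t) -> phi a <= phi b.
Proof.
  intros Hab Hd Hs. destruct (Req_dec a b) as [->|Hne]; [lra|].
  destruct (MVT_gen phi a b dphi) as [c [Hc Heq]].
  - intros t Ht. rewrite Rmin_left in Ht by lra; rewrite Rmax_right in Ht by lra. apply Hd; lra.
  - intros t Ht. rewrite Rmin_left in Ht by lra; rewrite Rmax_right in Ht by lra.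
    apply continuity_pt_filterlim. apply (@ex_derive_continuous R_AbsRing R_NormedModule). exists (dphi t). apply Hd; lra.
  - rewrite Rmin_left in Hc by lra; rewrite Rmax_right in Hc by lra.
    assert (0 <= dphi c) by (apply Hs; lra). nra.
Qed.

Lemma peak (phi dphi : R -> R) x : 0 < x ->
  (forall t, 0 < t -> is_derive phi t (dphi t)) ->
  (forall t, 0 < t <= x -> 0 <= dphi t) ->
  (forall t, x <= t -> dphi t <= 0) ->
  forall t, 0 < t -> phi t <= phi x.
Proof.
  intros Hx Hd H1 H2 t Ht. destruct (Rle_lt_dec t x).
  - apply (mvt_le phi dphi); [lra| |]; intros s Hs; [apply Hd|apply H1]; lra.
  - assert (H: - phi x <= - phi t); [|lra].
    apply (mvt_le (fun s => - phi s) (fun s => - dphi s)); [lra| |].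
    + intros s Hs. apply (is_derive_opp phi). apply Hd; lra.
    + intros s Hs. assert (dphi s <= 0) by (apply H2; lra). lra.
Qed.

Lemma Rpower_le_neg e t x : e <= 0 -> 0 < t <= x -> Rpower x e <= Rpower t e.
Proof.
  intros He Ht. assert (E: forall z, Rpower z e = / Rpower z (- e)).
  { intros z. rewrite <- Rpower_Ropp. f_equal; ring. }
  rewrite !E. apply Rinv_le_contravar. apply Rpow_pos. apply Rle_Rpower_l; lra.
Qed.

Lemma ballR (x : R) (e : R) y : @ball R_UniformSpace x e y <-> Rabs (y - x) < e.
Proof. unfold ball; simpl; unfold AbsRing_ball, abs, minus, plus, opp; simpl. tauto. Qed.

Definition IG (f : R -> R) (l : R) := is_RInt_gen f (at_right 0) (Rbar_locally p_infty) l.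

Lemma fp_pos : filter_prod (at_right 0) (Rbar_locally p_infty) (fun ab : R * R => 0 < fst ab /\ 0 < snd ab).
Proof.
  apply Filter_prod with (fun a => 0 < a) (fun b => 0 < b).
  - exists (mkposreal 1 Rlt_0_1). intros; auto.
  - exists 0. intros; auto.
  - simpl; auto.
Qed.

Lemma IG_ext f g l : (forall t, 0 < t -> f t = g t) -> IG f l -> IG g l.
Proof.
  intros H. apply is_RInt_gen_ext.
  eapply filter_imp; [|apply fp_pos]. intros [a b] [Ha Hb] t Ht. simpl in *. apply H.
  destruct Ht as [Ht _]. unfold Rmin in Ht; destruct Rle_dec; lra.
Qed.

Lemma IG_scale f l k : 0 < k -> IG f l -> IG (fun t => k * f (k * t)) l.
Proof.
  intros Hk H P HP. specialize (H P HP).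
  destruct H as [Q R HQ HR HQR].
  assert (Hk0 : k <> 0) by (apply Rgt_not_eq; exact Hk).
  apply Filter_prod with (fun a => Q (k * a)) (fun b => R (k * b)).
  - destruct HQ as [eps He]. assert (Hp: 0 < eps / k) by (apply Rdiv_lt_0_compat; [apply cond_pos|exact Hk]).
    exists (mkposreal _ Hp). intros y Hy Hy0. apply He; [|apply Rmult_lt_0_compat; assumption].
    apply ballR in Hy; apply ballR. cbn in Hy. 
    assert (Ha: Rabs (k * y - 0) = k * Rabs (y - 0)).
    { rewrite !Rminus_0_r, Rabs_mult, (Rabs_right k). reflexivity. lra. }
    rewrite Ha. apply Rmult_lt_compat_l with (r:=k) in Hy; [|exact Hk].
    replace (k * (eps / k)) with (pos eps) in Hy by (field; exact Hk0). exact Hy.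
  - destruct HR as [M HM]. exists (M / k). intros x Hx. apply HM.
    apply Rmult_lt_compat_l with (r:=k) in Hx; [|exact Hk].
    replace (k * (M / k)) with M in Hx by (field; exact Hk0). exact Hx.
  - intros a b Ha Hb. destruct (HQR _ _ Ha Hb) as [z [Hz Pz]]. exists z; split; [|exact Pz]. 
    
    apply (is_RInt_ext (V:=R_NormedModule) (fun y => scal k (f (k * y + 0)))).
    { intros; rewrite Rplus_0_r; reflexivity. }
    
    apply (is_RInt_comp_lin (V:=R_NormedModule)).  rewrite !Rplus_0_r. exact Hz.
Qed.

Lemma plusR (x y : R) : plus x y = x + y.
Proof. reflexivity. Qed.
Lemma plusC (x y : R) : @plus (CompleteNormedModule.AbelianMonoid R_AbsRing R_CompleteNormedModule) x y = x + y.
Proof. reflexivity. Qed.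
Lemma scalR (x y : R) : scal x y = x * y.
Proof. reflexivity. Qed.
Lemma minusR (x y : R) : minus x y = x - y.
Proof. reflexivity. Qed.
Lemma oppR (x : R) : opp x = - x.
Proof. reflexivity. Qed.

Lemma RInt_mono_int f a' a b b' : Der f -> (forall t, 0 < t -> 0 <= f t) ->
  0 < a' -> a' <= a -> a <= b -> b <= b' -> RInt f a b <= RInt f a' b'.
Proof.
  intros Hd Hn H1 H2 H3 H4.
  rewrite <- (RInt_Chasles f a' a b') by (apply Der_exRInt; auto; lra).
  rewrite <- (RInt_Chasles f a b b') by (apply Der_exRInt; auto; lra).
  assert (0 <= RInt f a' a) by (apply RInt_ge_0; [lra|apply Der_exRInt; auto; lra| intros; apply Hn; lra]).
  assert (0 <= RInt f b b') by (apply RInt_ge_0; [lra|apply Der_exRInt; auto; lra| intros; apply Hn; lra]).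
  revert H H0; generalize (RInt f a' a) (RInt f a b) (RInt f b b'); intros u v w Hu Hw; unfold plus; simpl; lra.
Qed.

Lemma IG_partial f l a b : Der f -> (forall t, 0 < t -> 0 <= f t) -> IG f l ->
  0 < a -> a <= b -> RInt f a b <= l.
Proof.
  intros Hd Hn H Ha Hab. apply Rnot_lt_le. intros Hlt.
  assert (Hp: 0 < RInt f a b - l) by lra.
  specialize (H (ball l (mkposreal _ Hp)) (locally_ball _ _)).
  destruct H as [Q R HQ HR HQR].
  destruct HQ as [eps He]. destruct HR as [M HM].
  pose proof (cond_pos eps) as Heps.
  set (a' := Rmin a (eps / 2)). set (b' := Rmax b (Rabs M + 1)).
  assert (Ha'1 : 0 < a') by (unfold a'; apply Rmin_glb_lt; lra).
  assert (Ha'2 : a' <= a) by apply Rmin_l.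
  assert (Ha'3 : a' <= eps / 2) by apply Rmin_r.
  assert (Hb'1 : b <= b') by apply Rmax_l.
  assert (Hb'2 : Rabs M + 1 <= b') by apply Rmax_r.
  assert (QA : Q a').
  { apply He; [|exact Ha'1]. apply ballR. rewrite Rminus_0_r, Rabs_right by lra. lra. }
  assert (RB : R b').
  { apply HM. pose proof (Rle_abs M). lra. }
  destruct (HQR _ _ QA RB) as [z [Hz Pz]].
  change (is_RInt f a' b' z) in Hz.
  apply (is_RInt_unique (V:=R_CompleteNormedModule)) in Hz. apply ballR in Pz.
  assert (RInt f a b <= RInt f a' b') by (apply RInt_mono_int; auto; lra).
  change (RInt f a' b' = z) in Hz. change (Rabs (z - l) < RInt f a b - l) in Pz.
  rewrite Hz in H. apply Rabs_def2 in Pz. lra.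
Qed.

Lemma IG_pos f l t0 : Der f -> (forall t, 0 < t -> 0 <= f t) -> 0 < t0 -> 0 < f t0 -> IG f l -> 0 < l.
Proof.
  intros Hd Hn Ht0 Hf H.
  assert (Hc := Der_cont f t0 Hd Ht0).
  assert (Hp : 0 < f t0 / 2) by lra.
  specialize (Hc (ball (f t0) (mkposreal _ Hp)) (locally_ball _ _)).
  destruct Hc as [del Hdel]. pose proof (cond_pos del).
  set (d := Rmin (del/2) (t0/2)).
  assert (0 < d) by (apply Rmin_glb_lt; lra).
  assert (d <= del/2) by apply Rmin_l. assert (d <= t0/2) by apply Rmin_r.
  assert (Hlt : RInt (fun _ => 0) (t0 - d) t0 < RInt f (t0 - d) t0).
  { apply RInt_lt; [lra| intros; apply Der_cont; auto; lra | intros; apply continuous_const | ].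
    intros t Ht. assert (B: ball t0 del t) by (apply ballR; rewrite Rabs_left by lra; lra).
    specialize (Hdel t B). assert (Hd3 : Rabs (f t - f t0) < f t0 / 2) by exact Hdel. apply Rabs_def2 in Hd3. lra. }
  rewrite RInt_const in Hlt. rewrite scalR in Hlt.
  assert (RInt f (t0 - d) t0 <= l) by (apply IG_partial; auto; lra). lra.
Qed.

Lemma IG_minus f g A B : IG f A -> IG g B -> IG (fun t => g t - f t) (B - A).
Proof. intros HA HB. exact (is_RInt_gen_minus (V:=R_NormedModule) g f B A HB HA). Qed.

Lemma IG_le f g A B : Der f -> Der g -> (forall t, 0 < t -> f t <= g t) -> IG f A -> IG g B -> A <= B.
Proof.
  intros Hf Hg Hle HA HB.
  pose proof (IG_minus f g A B HA HB) as HD.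
  assert (H : RInt (fun t => g t - f t) 1 1 <= B - A).
  { apply IG_partial; try exact HD; try lra. apply Der_minus; auto. intros t Ht; specialize (Hle t Ht); lra. }
  rewrite RInt_point in H. change (0 <= B - A) in H. lra.
Qed.

Lemma IG_lt f g A B t0 : Der f -> Der g -> (forall t, 0 < t -> f t <= g t) -> 0 < t0 -> f t0 < g t0 ->
  IG f A -> IG g B -> A < B.
Proof.
  intros Hf Hg Hle Ht0 Hlt HA HB.
  pose proof (IG_minus f g A B HA HB) as HD.
  assert (0 < B - A); [|lra].
  apply (IG_pos _ _ t0 (Der_minus _ _ Hg Hf)); try exact HD; try lra.
  intros t Ht; specialize (Hle t Ht); lra.
Qed.

Lemma IG_sup f B : Der f -> (forall t, 0 < t -> 0 <= f t) ->
  (forall a b, 0 < a -> a <= b -> RInt f a b <= B) -> exists l, IG f l.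
Proof.
  intros Hd Hn HB.
  set (E := fun v => exists a b, 0 < a /\ a <= b /\ v = RInt f a b).
  assert (Hb : bound E).
  { exists B; intros v [a [b [Ha [Hab Hv]]]]. rewrite Hv; apply HB; auto. }
  assert (Hne : exists v, E v) by (exists (RInt f 1 1); exists 1, 1; repeat split; lra).
  destruct (completeness E Hb Hne) as [S [HS1 HS2]].
  exists S. intros P [eps HP]. pose proof (cond_pos eps).
  assert (Hex : exists a0 b0, 0 < a0 /\ a0 <= b0 /\ S - eps < RInt f a0 b0).
  { apply NNPP; intros Hno. assert (S <= S - eps); [|lra].
    apply HS2. intros v [a [b [Ha [Hab Hv]]]]. apply Rnot_lt_le. intros Hl. apply Hno. exists a, b; rewrite <- Hv; auto. }
  destruct Hex as [a0 [b0 [Ha0 [Hab0 Hlt]]]].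
  apply Filter_prod with (fun a => 0 < a <= a0) (fun b => b0 <= b).
  - exists (mkposreal _ Ha0). intros y Hy Hy0. apply ballR in Hy.
    assert (Hy2 : Rabs (y - 0) < a0) by exact Hy. rewrite Rminus_0_r, Rabs_right in Hy2 by lra. lra.
  - exists b0. intros; lra.
  - intros a b [Ha1 Ha2] Hb0. exists (RInt f a b). split.
    + apply (RInt_correct (V:=R_CompleteNormedModule)). apply Der_exRInt; auto; lra.
    + apply HP. apply ballR.
      assert (RInt f a b <= S) by (apply HS1; exists a, b; repeat split; lra).
      assert (RInt f a0 b0 <= RInt f a b) by (apply RInt_mono_int; auto; lra).
      apply Rabs_def1; lra.
Qed.

Definition psi (c s : R) := Rpower s (c - 1) * exp (- s).

Lemma Der_expneg : Der (fun t => exp (- t)).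
Proof. intros t Ht; auto_derive; auto. Qed.

Lemma Der_psi c : Der (psi c).
Proof. unfold psi. apply Der_mult; [apply Der_Rpower|apply Der_expneg]. Qed.

Lemma psi_pos c s : 0 < psi c s.
Proof. unfold psi. apply Rmult_lt_0_compat; [apply Rpow_pos|apply exp_pos]. Qed.

Lemma ln_lt_id u : 0 < u -> ln u < u.
Proof.
  intros Hu. destruct (Req_dec (ln u) 0) as [E|E].
  - rewrite E; auto.
  - pose proof (exp_ineq1 _ E). rewrite exp_ln in H by auto. lra.
Qed.

Lemma psi_tail c : 0 < c -> exists K, 0 < K /\ forall s, 1 <= s -> psi c s * (s * s) <= K.
Proof.
  intros Hc. set (m := 2 * (c + 1)). assert (Hm : 0 < m) by (unfold m; lra).
  exists (exp ((c + 1) * ln m)). split; [apply exp_pos|].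
  intros s Hs.
  assert (Hs0 : 0 < s) by lra.
  assert (E : psi c s * (s * s) = exp ((c + 1) * ln s - s)).
  { replace (s * s) with (exp (ln s) * exp (ln s)) by (rewrite exp_ln; auto).
    unfold psi, Rpower. rewrite <- !exp_plus. f_equal. ring. }
  rewrite E. apply Rlt_le, exp_increasing.
  assert (L : ln s = ln m + ln (s / m)).
  { rewrite <- ln_mult by (try apply Rdiv_lt_0_compat; auto). f_equal. field. lra. }
  pose proof (ln_lt_id (s / m) (Rdiv_lt_0_compat _ _ Hs0 Hm)).
  assert (Hq : (c + 1) * (s / m) = s / 2) by (unfold m; field; lra).
  rewrite L. nra.
Qed.

Lemma Der_inv2 K : Der (fun s => K / (s * s)).
Proof. intros t Ht; auto_derive; nra. Qed.

Lemma Rpower_1_base c : Rpower 1 c = 1.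
Proof. unfold Rpower. rewrite ln_1, Rmult_0_r, exp_0. reflexivity. Qed.

Lemma psi_bound c : 0 < c -> exists B, forall a b, 0 < a -> a <= b -> RInt (psi c) a b <= B.
Proof.
  intros Hc. destruct (psi_tail c Hc) as [K [HK HKb]].
  exists (/ c + K). intros a b Ha Hab.
  set (a' := Rmin a 1). set (b' := Rmax b 1).
  assert (0 < a') by (unfold a'; apply Rmin_glb_lt; lra).
  assert (a' <= a) by apply Rmin_l. assert (a' <= 1) by apply Rmin_r.
  assert (b <= b') by apply Rmax_l. assert (1 <= b') by apply Rmax_r.
  assert (J1 : RInt (psi c) a b <= RInt (psi c) a' b')
    by (apply RInt_mono_int; [apply Der_psi| intros; apply Rlt_le, psi_pos|lra|lra|lra|lra]).
  rewrite <- (RInt_Chasles (psi c) a' 1 b') in J1 by (apply Der_exRInt; [apply Der_psi|lra|lra]).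
  assert (J2 : RInt (psi c) a' 1 <= / c).
  { set (F := fun s => / c * Rpower s c).
    assert (HF : forall s, 0 < s -> is_derive F s (Rpower s (c - 1))).
    { intros s Hs. unfold F.
      replace (Rpower s (c - 1)) with (/ c * (c * Rpower s (c - 1))) by (field; lra).
      apply (is_derive_scal (fun t => Rpower t c)). apply Rpower_deriv; auto. }
    assert (HI : is_RInt (fun s => Rpower s (c - 1)) a' 1 (minus (F 1) (F a'))).
    { apply (is_RInt_derive (V:=R_CompleteNormedModule)).
      - intros s Hs. rewrite Rmin_left, Rmax_right in Hs by lra. apply HF; lra.
      - intros s Hs. rewrite Rmin_left, Rmax_right in Hs by lra. apply Der_cont; [apply Der_Rpower|lra]. }
    apply (is_RInt_unique (V:=R_CompleteNormedModule)) in HI.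
    assert (H4 : RInt (psi c) a' 1 <= RInt (fun s => Rpower s (c - 1)) a' 1).
    { apply RInt_le; [lra| apply Der_exRInt; [apply Der_psi|lra|lra] | apply Der_exRInt; [apply Der_Rpower|lra|lra] |].
      intros s Hs. unfold psi. pose proof (Rpow_pos s (c - 1)).
      assert (exp (- s) <= 1) by (rewrite <- exp_0; apply Rlt_le, exp_increasing; lra). nra. }
    rewrite HI in H4. change (minus (F 1) (F a')) with (F 1 - F a') in H4. unfold F in H4.
    rewrite Rpower_1_base in H4. pose proof (Rpow_pos a' c). assert (0 < / c) by (apply Rinv_0_lt_compat; lra).
    nra. }
  assert (J3 : RInt (psi c) 1 b' <= K).
  { set (F := fun s => - K / s).
    assert (HF : forall s, 0 < s -> is_derive F s (K / (s * s))).
    { intros s Hs. unfold F. auto_derive. lra. field. lra. }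
    assert (HI : is_RInt (fun s => K / (s * s)) 1 b' (minus (F b') (F 1))).
    { apply (is_RInt_derive (V:=R_CompleteNormedModule)).
      - intros s Hs. rewrite Rmin_left, Rmax_right in Hs by lra. apply HF; lra.
      - intros s Hs. rewrite Rmin_left, Rmax_right in Hs by lra. apply Der_cont; [apply Der_inv2|lra]. }
    apply (is_RInt_unique (V:=R_CompleteNormedModule)) in HI.
    assert (H4 : RInt (psi c) 1 b' <= RInt (fun s => K / (s * s)) 1 b').
    { apply RInt_le; [lra| apply Der_exRInt; [apply Der_psi|lra|lra] | apply Der_exRInt; [apply Der_inv2|lra|lra] |].
      intros s Hs. specialize (HKb s ltac:(lra)). 
      apply Rmult_le_reg_r with (s * s); [nra|]. unfold Rdiv. rewrite Rmult_assoc, Rinv_l by nra. lra. }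
    rewrite HI in H4. change (minus (F b') (F 1)) with (F b' - F 1) in H4. unfold F in H4.
    assert (0 <= K / b') by (apply Rdiv_le_0_compat; lra). 
    replace (- K / b') with (- (K / b')) in H4 by (field; lra). lra. }
  revert J1 J2 J3. generalize (RInt (psi c) a b) (RInt (psi c) a' 1) (RInt (psi c) 1 b'). intros u v w J1 J2 J3.
  unfold plus in J1; simpl in J1. lra.
Qed.

Lemma IG_gamma c : 0 < c -> IG (psi c) (Gamma c) /\ 0 < Gamma c.
Proof.
  intros Hc. destruct (psi_bound c Hc) as [B HB].
  destruct (IG_sup (psi c) B (Der_psi c) (fun t _ => Rlt_le _ _ (psi_pos c t)) HB) as [l Hl].
  assert (E : Gamma c = l).
  { unfold Gamma. apply (is_RInt_gen_unique (V:=R_CompleteNormedModule)). exact Hl. }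
  rewrite E. split; auto.
  apply (IG_pos (psi c) l 1 (Der_psi c)); auto; try lra.
  intros; apply Rlt_le, psi_pos. apply psi_pos.
Qed.

Lemma IG_scal f l k : IG f l -> IG (fun t => k * f t) (k * l).
Proof. intros H. exact (is_RInt_gen_scal (V:=R_NormedModule) f k l H). Qed.

Lemma IG_plus f g A B : IG f A -> IG g B -> IG (fun t => f t + g t) (A + B).
Proof. intros HA HB. exact (is_RInt_gen_plus (V:=R_NormedModule) f g A B HA HB). Qed.

Lemma subst_rho phi x y L : 0 < x -> 0 < y ->
  IG (fun s => phi (x / y * s) * psi y s) L ->
  IG (fun t => phi t * gamma_density y x t) (L / Gamma y).
Proof.
  intros Hx Hy H.
  destruct (IG_gamma y Hy) as [_ HG].
  set (k := y / x). assert (Hk : 0 < k) by (unfold k; apply Rdiv_lt_0_compat; auto).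
  pose proof (IG_scal _ _ (/ Gamma y) (IG_scale _ L k Hk H)) as H2.
  replace (L / Gamma y) with (/ Gamma y * L) by (field; lra).
  eapply IG_ext; [|exact H2]. intros t Ht. cbv beta.
  replace (x / y * (k * t)) with t by (unfold k; field; lra).
  unfold psi, gamma_density.
  rewrite <- (Rpower_mult_distr k t (y - 1)) by auto.
  replace (exp (- (k * t))) with (exp (- (t * y / x))) by (f_equal; unfold k; field; lra).
  assert (Ek : Rpower (y / x) y = k * Rpower k (y - 1)).
  { fold k. replace y with (1 + (y - 1)) at 1 by ring. rewrite Rpower_plus, Rpower_1 by auto. reflexivity. }
  rewrite Ek. ring.
Qed.

Lemma IG_antideriv (F dF : R -> R) LA LB : Der dF -> (forall s, 0 < s -> is_derive F s (dF s)) ->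
  (forall eps, 0 < eps -> exists del, 0 < del /\ forall a, 0 < a < del -> Rabs (F a - LA) < eps) ->
  (forall eps, 0 < eps -> exists M, forall b, M < b -> Rabs (F b - LB) < eps) ->
  IG dF (LB - LA).
Proof.
  intros Hd HF HA HB P [eps HP]. pose proof (cond_pos eps) as He.
  destruct (HA (eps / 2)) as [del [Hdel Hdel2]]; [lra|].
  destruct (HB (eps / 2)) as [M HM]; [lra|].
  apply Filter_prod with (fun a => 0 < a < del) (fun b => Rmax M 0 < b).
  - exists (mkposreal _ Hdel). intros y Hy Hy0. apply ballR in Hy.
    assert (Hy2 : Rabs (y - 0) < del) by exact Hy. rewrite Rminus_0_r, Rabs_right in Hy2 by lra. lra.
  - exists (Rmax M 0). intros; auto.
  - intros a b Ha Hb. exists (F b - F a). split.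
    + apply (is_RInt_derive (V:=R_CompleteNormedModule) F dF a b).
      * intros s Hs. apply HF. assert (0 < Rmin a b) by (apply Rmin_glb_lt; pose proof (Rmax_r M 0); lra). lra.
      * intros s Hs. apply Der_cont; auto. assert (0 < Rmin a b) by (apply Rmin_glb_lt; pose proof (Rmax_r M 0); lra). lra.
    + apply HP. apply ballR.
      assert (Hb1 : Rabs (F b - LB) < eps / 2) by (apply HM; pose proof (Rmax_l M 0); lra).
      assert (Ha1 : Rabs (F a - LA) < eps / 2) by (apply Hdel2; lra).
      apply Rabs_def2 in Hb1. apply Rabs_def2 in Ha1. apply Rabs_def1; lra.
Qed.

Lemma IG_mean0 y : 0 < y -> IG (fun s => (s - y) * psi y s) 0.
Proof.
  intros Hy.
  replace 0 with (0 - 0) by ring.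
  apply (IG_antideriv (fun s => - (Rpower s y * exp (- s)))).
  - apply Der_mult; [apply Der_minus; [apply Der_id|apply Der_const]|apply Der_psi].
  - intros s Hs.
    assert (D1 := Rpower_deriv s y Hs).
    assert (D2 : is_derive (fun t => exp (- t)) s (- exp (- s))) by (auto_derive; auto; ring).
    pose proof (is_derive_mult _ _ s _ _ D1 D2 Rmult_comm) as D3.
    pose proof (is_derive_opp _ s _ D3) as D4.
    assert (Eq : (s - y) * psi y s = opp (plus (mult (y * Rpower s (y - 1)) (exp (- s))) (mult (Rpower s y) (- exp (- s))))).
    { change (opp (plus (mult (y * Rpower s (y - 1)) (exp (- s))) (mult (Rpower s y) (- exp (- s)))))
        with (- ((y * Rpower s (y - 1)) * (exp (- s)) + (Rpower s y) * (- exp (- s)))).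
      unfold psi. replace (Rpower s y) with (s * Rpower s (y - 1)).
      ring. replace y with (1 + (y - 1)) at 2 by ring. rewrite Rpower_plus, Rpower_1 by auto. reflexivity. }
    rewrite Eq. exact D4.
  - intros eps He. exists (Rpower eps (/ y)). split; [apply Rpow_pos|].
    intros a Ha. rewrite Rminus_0_r, Rabs_Ropp, Rabs_right.
    + assert (exp (- a) <= 1) by (rewrite <- exp_0; apply Rlt_le, exp_increasing; lra).
      assert (Rpower a y < Rpower (Rpower eps (/ y)) y) by (apply Rlt_Rpower_l; lra).
      rewrite Rpower_mult, Rinv_l, Rpower_1 in H0 by lra.
      pose proof (Rpow_pos a y). nra.
    + apply Rle_ge, Rlt_le, Rmult_lt_0_compat; [apply Rpow_pos|apply exp_pos].
  - intros eps He. destruct (psi_tail (y + 1)) as [K [HK HKb]]; [lra|].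
    exists (Rmax 1 (K / eps)). intros b Hb.
    pose proof (Rmax_l 1 (K / eps)). pose proof (Rmax_r 1 (K / eps)).
    specialize (HKb b ltac:(lra)).
    assert (E : psi (y + 1) b = Rpower b y * exp (- b)) by (unfold psi; f_equal; f_equal; ring).
    rewrite E in HKb. pose proof (psi_pos (y + 1) b). rewrite E in H1.
    rewrite Rminus_0_r, Rabs_Ropp, Rabs_right by lra.
    assert (K < eps * b).
    { assert (K / eps < b) by lra. apply Rmult_lt_compat_l with (r := eps) in H2; auto.
      replace (eps * (K / eps)) with K in H2 by (field; lra). exact H2. }
    set (p := Rpower b y * exp (- b)) in *. nra.
Qed.

Lemma Der_rho y x : Der (gamma_density y x).
Proof.
  intros t Ht. unfold gamma_density.
  apply (ex_derive_mult (fun t => / Gamma y * Rpower (y / x) y * Rpower t (y - 1)) (fun t => exp (- (t * y / x)))).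
  - apply (ex_derive_mult (fun _ => / Gamma y * Rpower (y / x) y) (fun t => Rpower t (y - 1))).
    + apply ex_derive_const.
    + eexists; apply Rpower_deriv; auto.
  - auto_derive; auto.
Qed.

Lemma rho_pos y x t : 0 < y -> 0 < gamma_density y x t.
Proof.
  intros Hy. destruct (IG_gamma y Hy) as [_ HG]. unfold gamma_density.
  pose proof (Rinv_0_lt_compat _ HG). pose proof (Rpow_pos (y / x) y). pose proof (Rpow_pos t (y - 1)).
  pose proof (exp_pos (- (t * y / x))).
  repeat apply Rmult_lt_0_compat; auto.
Qed.

Lemma rho_I0 y x : 0 < x -> 0 < y -> IG (gamma_density y x) 1.
Proof.
  intros Hx Hy. destruct (IG_gamma y Hy) as [HI HG].
  assert (H : IG (fun s => (fun _ => 1) (x / y * s) * psi y s) (Gamma y)).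
  { eapply IG_ext; [|exact HI]. intros; cbv beta; ring. }
  pose proof (subst_rho _ x y _ Hx Hy H) as H2.
  replace (Gamma y / Gamma y) with 1 in H2 by (field; lra).
  eapply IG_ext; [|exact H2]. intros; cbv beta; ring.
Qed.

Lemma rho_I1 y x : 0 < x -> 0 < y -> IG (fun t => (t - x) * gamma_density y x t) 0.
Proof.
  intros Hx Hy. destruct (IG_gamma y Hy) as [HI HG].
  assert (H : IG (fun s => (fun t => t - x) (x / y * s) * psi y s) 0).
  { pose proof (IG_scal _ _ (x / y) (IG_mean0 y Hy)) as H0. rewrite Rmult_0_r in H0.
    eapply IG_ext; [|exact H0]. intros; cbv beta. field. lra. }
  pose proof (subst_rho _ x y _ Hx Hy H) as H2.
  replace (0 / Gamma y) with 0 in H2 by (field; lra). exact H2.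
Qed.

Lemma rho_Il y x l : 0 < x -> 0 < y -> 0 < l ->
  IG (fun t => Rpower t l * gamma_density y x t) (Rpower (x / y) l * Gamma (y + l) / Gamma y).
Proof.
  intros Hx Hy Hl. destruct (IG_gamma (y + l)) as [HI HG]; [lra|].
  assert (H : IG (fun s => (fun t => Rpower t l) (x / y * s) * psi y s) (Rpower (x / y) l * Gamma (y + l))).
  { pose proof (IG_scal _ _ (Rpower (x / y) l) HI) as H0.
    eapply IG_ext; [|exact H0]. intros s Hs; cbv beta. unfold psi.
    rewrite <- Rpower_mult_distr by (try apply Rdiv_lt_0_compat; auto).
    replace (y + l - 1) with (l + (y - 1)) by ring. rewrite Rpower_plus. ring. }
  exact (subst_rho _ x y _ Hx Hy H).
Qed.

Definition hB (l : R) (f : R -> R) := fun x => Derive f x * Rpower x (1 - l).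

Lemma Der_f l f : gen_Bernstein l f -> Der f.
Proof. intros [_ [Hd _]] t Ht. exact (Hd 1%nat t Ht). Qed.

Lemma h_nonneg l f s : gen_Bernstein l f -> 0 < s -> 0 <= hB l f s.
Proof. intros [_ [_ Hc]] Hs. destruct (Hc 0%nat s Hs) as [_ H]. simpl in H. unfold hB. lra. Qed.

Lemma h_decr l f s t : gen_Bernstein l f -> 0 < s -> s <= t -> hB l f t <= hB l f s.
Proof.
  intros [_ [_ Hc]] Hs Hst.
  assert (-(hB l f s) <= - (hB l f t)); [|lra].
  apply (mvt_le (fun u => - hB l f u) (fun u => - Derive (hB l f) u)); auto.
  - intros u Hu. destruct (Hc 1%nat u ltac:(lra)) as [Hex _].
    apply (is_derive_opp (hB l f)). apply Derive_correct. exact Hex.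
  - intros u Hu. destruct (Hc 1%nat u ltac:(lra)) as [_ H]. simpl in H. unfold hB. lra.
Qed.

Lemma Df_h l f s : 0 < s -> Derive f s = hB l f s * Rpower s (l - 1).
Proof.
  intros Hs. unfold hB. rewrite Rmult_assoc, <- Rpower_plus.
  replace (1 - l + (l - 1)) with 0 by ring. rewrite Rpower_O by auto. ring.
Qed.

Lemma utangent l f x : 0 < l -> gen_Bernstein l f -> 0 < x ->
  forall t, 0 < t -> f t - hB l f x / l * Rpower t l <= f x - hB l f x / l * Rpower x l.
Proof.
  intros Hl HB Hx.
  set (be := hB l f x / l).
  apply (peak (fun t => f t - be * Rpower t l) (fun t => Derive f t - be * (l * Rpower t (l - 1)))); auto.
  - intros t Ht. apply (is_derive_minus f (fun t => be * Rpower t l)).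
    + apply Derive_correct. apply (Der_f l f HB); auto.
    + apply (is_derive_scal (fun t => Rpower t l)). apply Rpower_deriv; auto.
  - intros t Ht. rewrite (Df_h l) by lra. pose proof (h_decr l f t x HB ltac:(lra) ltac:(lra)).
    pose proof (Rpow_pos t (l - 1)). unfold be.
    replace (hB l f x / l * (l * Rpower t (l - 1))) with (hB l f x * Rpower t (l - 1)) by (field; lra). nra.
  - intros t Ht. rewrite (Df_h l) by lra. pose proof (h_decr l f x t HB ltac:(lra) ltac:(lra)).
    pose proof (Rpow_pos t (l - 1)). unfold be.
    replace (hB l f x / l * (l * Rpower t (l - 1))) with (hB l f x * Rpower t (l - 1)) by (field; lra). nra.
Qed.

Lemma Rpower_inv_l a l : 0 < a -> 0 < l -> Rpower (Rpower a (/ l)) l = a.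
Proof. intros Ha Hl. rewrite Rpower_mult, Rinv_l, Rpower_1 by lra. reflexivity. Qed.

Lemma fx_ge l f x : 0 < l -> gen_Bernstein l f -> 0 < x -> hB l f x / l * Rpower x l <= f x.
Proof.
  intros Hl HB Hx. set (be := hB l f x / l).
  assert (Hbe : 0 <= be) by (unfold be; apply Rdiv_le_0_compat; [apply (h_nonneg l f x HB Hx)|lra]).
  pose proof (utangent l f x Hl HB Hx) as U. fold be in U.
  destruct HB as [Hpos _].
  apply Rnot_lt_le. intros Hlt.
  destruct (Req_dec be 0) as [E|E].
  - rewrite E in Hlt. pose proof (Hpos x Hx). lra.
  - assert (Hbp: 0 < be) by (destruct Hbe as [h|h]; [exact h| exfalso; apply E; symmetry; exact h]).
    set (D := be * Rpower x l - f x).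
    assert (HD : 0 < D / (2 * be)) by (apply Rdiv_lt_0_compat; unfold D; lra).
    set (t := Rpower (D / (2 * be)) (/ l)).
    assert (Ht : 0 < t) by apply Rpow_pos.
    specialize (U t Ht). unfold t in U. rewrite Rpower_inv_l in U by lra.
    pose proof (Hpos _ Ht). unfold t in H.
    replace (be * (D / (2 * be))) with (D / 2) in U by (field; exact E).
    assert (HDdef : D = be * Rpower x l - f x) by reflexivity. lra.
Qed.

Lemma ustrict l f x : 0 < l -> gen_Bernstein l f -> 0 < x ->
  (exists M : R, forall t, 0 < t -> Rabs (f t) <= M) ->
  (exists a b : R, 0 < a /\ 0 < b /\ f a <> f b) ->
  exists t0, 0 < t0 /\ f t0 - hB l f x / l * Rpower t0 l < f x - hB l f x / l * Rpower x l.
Proof.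
  intros Hl HB Hx [M HM] [a [b [Ha [Hb Hab]]]].
  set (be := hB l f x / l).
  assert (Hbe : 0 <= be) by (unfold be; apply Rdiv_le_0_compat; [apply (h_nonneg l f x HB Hx)|lra]).
  pose proof (utangent l f x Hl HB Hx) as U. fold be in U.
  apply NNPP. intros Hno. set (C := f x - be * Rpower x l).
  assert (Heq : forall t, 0 < t -> f t = C + be * Rpower t l).
  { intros t Ht. specialize (U t Ht). fold C in U. assert (~ (f t - be * Rpower t l < C)) by (intros Hc; apply Hno; exists t; auto). unfold C in *. lra. }
  destruct (Req_dec be 0) as [E|E].
  - apply Hab. rewrite (Heq a Ha), (Heq b Hb), E. ring.
  - assert (Hbp: 0 < be) by (destruct Hbe as [h|h]; [exact h| exfalso; apply E; symmetry; exact h]).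
    set (T := Rabs ((M - C) / be) + 1).
    assert (HT : 0 < T) by (unfold T; pose proof (Rabs_pos ((M - C) / be)); lra).
    set (t := Rpower T (/ l)). assert (Ht : 0 < t) by apply Rpow_pos.
    specialize (HM t Ht). rewrite (Heq t Ht) in HM. unfold t in HM. rewrite Rpower_inv_l in HM by lra.
    pose proof (Rle_abs (C + be * T)). 
    assert ((M - C) / be < T) by (unfold T; pose proof (Rle_abs ((M - C) / be)); lra).
    assert (be * ((M - C) / be) < be * T) by (apply Rmult_lt_compat_l; lra).
    replace (be * ((M - C) / be)) with (M - C) in H1 by (field; exact E). lra.
Qed.

Lemma bern_le l x : 0 < l -> l <= 1 -> 0 < x ->
  forall t, 0 < t -> Rpower t l <= Rpower x l + l * Rpower x (l - 1) * (t - x).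
Proof.
  intros Hl Hl1 Hx. set (c := l * Rpower x (l - 1)).
  assert (P : forall t, 0 < t -> Rpower t l - c * t <= Rpower x l - c * x).
  { apply (peak (fun t => Rpower t l - c * t) (fun t => l * Rpower t (l - 1) - c)); auto.
    - intros t Ht. apply (is_derive_minus (fun t => Rpower t l) (fun t => c * t)).
      + apply Rpower_deriv; auto.
      + auto_derive; auto; ring.
    - intros t Ht. unfold c. pose proof (Rpower_le_neg (l - 1) t x ltac:(lra) Ht). nra.
    - intros t Ht. unfold c. pose proof (Rpower_le_neg (l - 1) x t ltac:(lra) ltac:(lra)). nra. }
  intros t Ht. specialize (P t Ht). fold c. lra.
Qed.

Lemma bern_ge l x : 1 <= l -> 0 < x ->
  forall t, 0 < t -> Rpower x l + l * Rpower x (l - 1) * (t - x) <= Rpower t l.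
Proof.
  intros Hl1 Hx. set (c := l * Rpower x (l - 1)).
  assert (P : forall t, 0 < t -> c * t - Rpower t l <= c * x - Rpower x l).
  { apply (peak (fun t => c * t - Rpower t l) (fun t => c - l * Rpower t (l - 1))); auto.
    - intros t Ht. apply (is_derive_minus (fun t => c * t) (fun t => Rpower t l)).
      + auto_derive; auto; ring.
      + apply Rpower_deriv; auto.
    - intros t Ht. unfold c. pose proof (Rle_Rpower_l t x (l - 1) ltac:(lra) Ht). nra.
    - intros t Ht. unfold c. pose proof (Rle_Rpower_l x t (l - 1) ltac:(lra) ltac:(lra)). nra. }
  intros t Ht. specialize (P t Ht). fold c. lra.
Qed.

Lemma Der_frho l f y x : gen_Bernstein l f -> Der (fun t => f t * gamma_density y x t).
Proof. intros HB. apply Der_mult; [apply (Der_f l f HB)|apply Der_rho]. Qed.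

Lemma Der_crho c y x : Der (fun t => c * gamma_density y x t).
Proof. apply Der_mult; [apply Der_const|apply Der_rho]. Qed.

Lemma expect_IG l f x y : gen_Bernstein l f -> (exists M, forall t, 0 < t -> Rabs (f t) <= M) -> 0 < x -> 0 < y ->
  IG (fun t => f t * gamma_density y x t) (gamma_expect f y x).
Proof.
  intros HB [M HM] Hx Hy.
  pose proof HB as [Hpos _].
  assert (HM0 : 0 <= M) by (pose proof (HM 1 Rlt_0_1); pose proof (Rabs_pos (f 1)); lra).
  pose proof (IG_scal _ _ M (rho_I0 y x Hx Hy)) as HI. rewrite Rmult_1_r in HI.
  destruct (IG_sup (fun t => f t * gamma_density y x t) M (Der_frho l f y x HB)) as [L HL].
  - intros t Ht. pose proof (Hpos t Ht). pose proof (rho_pos y x t Hy). nra.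
  - intros a b Ha Hab. apply Rle_trans with (RInt (fun t => M * gamma_density y x t) a b).
    + apply RInt_le; [lra| apply Der_exRInt; [apply (Der_frho l f y x HB)|lra|lra] | apply Der_exRInt; [apply Der_crho|lra|lra] |].
      intros t Ht. pose proof (HM t ltac:(lra)). pose proof (Rle_abs (f t)). pose proof (rho_pos y x t Hy). nra.
    + apply IG_partial; auto. apply Der_crho. intros t Ht; pose proof (rho_pos y x t Hy); nra.
  - assert (E : gamma_expect f y x = L).
    { unfold gamma_expect; apply (is_RInt_gen_unique (V:=R_CompleteNormedModule)); exact HL. }
    rewrite E; exact HL.
Qed.

Theorem theorem1p2 (lambda : R) (f : R -> R) :
  0 < lambda ->
  gen_Bernstein lambda f ->
  (exists M : R, forall t, 0 < t -> Rabs (f t) <= M) ->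
  (exists a b : R, 0 < a /\ 0 < b /\ f a <> f b) ->
  (lambda <= 1 ->
     forall x y : R, 0 < x -> 0 < y -> gamma_expect f y x < f x) /\
  (1 < lambda ->
     forall x y : R, 0 < x -> 0 < y ->
       g_lambda lambda y * gamma_expect f y x < f x).
Proof.
  intros Hl HB Hbd Hnc. set (l := lambda) in *.
  split.
  - intros Hl1 x y Hx Hy.
    pose proof (expect_IG l f x y HB Hbd Hx Hy) as HE.
    set (be := hB l f x / l).
    assert (Hbe : 0 <= be) by (unfold be; apply Rdiv_le_0_compat; [apply (h_nonneg l f x HB Hx)|lra]).
    set (m := be * (l * Rpower x (l - 1))).
    pose proof (IG_plus _ _ _ _ (IG_scal _ _ (f x) (rho_I0 y x Hx Hy)) (IG_scal _ _ m (rho_I1 y x Hx Hy))) as HG.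
    replace (f x * 1 + m * 0) with (f x) in HG by ring.
    destruct (ustrict l f x Hl HB Hx Hbd Hnc) as [t0 [Ht0 Hs]]. fold be in Hs.
    pose proof (utangent l f x Hl HB Hx) as U. fold be in U.
    assert (Key : forall t, 0 < t -> f t - be * Rpower t l <= f x - be * Rpower x l -> 
                  f t <= f x + m * (t - x)).
    { intros t Ht Hu. pose proof (bern_le l x Hl Hl1 Hx t Ht) as Bn.
      assert (be * (Rpower t l - Rpower x l) <= be * (l * Rpower x (l - 1) * (t - x))) by (apply Rmult_le_compat_l; lra).
      replace (be * (l * Rpower x (l - 1) * (t - x))) with (m * (t - x)) in H by (unfold m; ring). lra. }
    assert (KeyS : f t0 < f x + m * (t0 - x)).
    { pose proof (bern_le l x Hl Hl1 Hx t0 Ht0) as Bn.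
      assert (be * (Rpower t0 l - Rpower x l) <= be * (l * Rpower x (l - 1) * (t0 - x))) by (apply Rmult_le_compat_l; lra).
      replace (be * (l * Rpower x (l - 1) * (t0 - x))) with (m * (t0 - x)) in H by (unfold m; ring). lra. }
    refine (IG_lt _ _ _ _ t0 (Der_frho l f y x HB) _ _ Ht0 _ HE HG).
    + apply Der_plus; [apply Der_crho|]. apply Der_mult; [apply Der_const|]. apply Der_mult; [apply Der_minus; [apply Der_id|apply Der_const]|apply Der_rho].
    + intros t Ht. pose proof (Key t Ht (U t Ht)). pose proof (rho_pos y x t Hy).
      replace (f x * gamma_density y x t + m * ((t - x) * gamma_density y x t)) with ((f x + m * (t - x)) * gamma_density y x t) by ring.
      apply Rmult_le_compat_r; lra.
    + pose proof (rho_pos y x t0 Hy).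
      replace (f x * gamma_density y x t0 + m * ((t0 - x) * gamma_density y x t0)) with ((f x + m * (t0 - x)) * gamma_density y x t0) by ring.
      apply Rmult_lt_compat_r; lra.
  - intros Hl1 x y Hx Hy.
    pose proof (expect_IG l f x y HB Hbd Hx Hy) as HE.
    set (be := hB l f x / l).
    assert (Hbe : 0 <= be) by (unfold be; apply Rdiv_le_0_compat; [apply (h_nonneg l f x HB Hx)|lra]).
    set (Il := Rpower (x / y) l * Gamma (y + l) / Gamma y).
    pose proof (rho_Il y x l Hx Hy Hl) as HIl. fold Il in HIl.
    pose proof (rho_I0 y x Hx Hy) as HI0.
    pose proof (IG_minus _ _ _ _ (IG_scal _ _ (Rpower x l) HI0) HIl) as HD.
    pose proof (IG_plus _ _ _ _ (IG_scal _ _ (f x) HI0) (IG_scal _ _ be HD)) as HG.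
    destruct (ustrict l f x Hl HB Hx Hbd Hnc) as [t0 [Ht0 Hs]]. fold be in Hs.
    pose proof (utangent l f x Hl HB Hx) as U. fold be in U.
    assert (Hlt : gamma_expect f y x < f x * 1 + be * (Il - Rpower x l * 1)).
    { refine (IG_lt _ _ _ _ t0 (Der_frho l f y x HB) _ _ Ht0 _ HE HG).
      + apply Der_plus; [apply Der_crho|]. apply Der_mult; [apply Der_const|].
        apply Der_minus; [apply Der_mult; [apply Der_Rpower|apply Der_rho]|apply Der_crho].
      + intros t Ht. pose proof (U t Ht). pose proof (rho_pos y x t Hy).
        replace (f x * gamma_density y x t + be * (Rpower t l * gamma_density y x t - Rpower x l * gamma_density y x t))
          with ((f x + be * (Rpower t l - Rpower x l)) * gamma_density y x t) by ring.
        apply Rmult_le_compat_r; lra.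
      + pose proof (rho_pos y x t0 Hy).
        replace (f x * gamma_density y x t0 + be * (Rpower t0 l * gamma_density y x t0 - Rpower x l * gamma_density y x t0))
          with ((f x + be * (Rpower t0 l - Rpower x l)) * gamma_density y x t0) by ring.
        apply Rmult_lt_compat_r; lra. }
    assert (HIlge : Rpower x l <= Il).
    { pose proof (IG_plus _ _ _ _ (IG_scal _ _ (Rpower x l) HI0) (IG_scal _ _ (l * Rpower x (l - 1)) (rho_I1 y x Hx Hy))) as HL.
      replace (Rpower x l * 1 + l * Rpower x (l - 1) * 0) with (Rpower x l) in HL by ring.
      refine (IG_le _ _ _ _ _ _ _ HL HIl).
      { apply Der_plus; [apply Der_crho|]; apply Der_mult; [apply Der_const|]; apply Der_mult; [apply Der_minus; [apply Der_id|apply Der_const]|apply Der_rho]. }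
      { apply Der_mult; [apply Der_Rpower|apply Der_rho]. }
      intros t Ht. pose proof (bern_ge l x ltac:(lra) Hx t Ht). pose proof (rho_pos y x t Hy).
      replace (Rpower x l * gamma_density y x t + l * Rpower x (l - 1) * ((t - x) * gamma_density y x t))
        with ((Rpower x l + l * Rpower x (l - 1) * (t - x)) * gamma_density y x t) by ring.
      apply Rmult_le_compat_r; lra. }
    destruct (IG_gamma y Hy) as [_ HGy]. destruct (IG_gamma (y + l)) as [_ HGyl]; [lra|].
    assert (Hxy : Rpower y l * Rpower (x / y) l = Rpower x l).
    { rewrite Rpower_mult_distr by (try apply Rdiv_lt_0_compat; auto). f_equal. field. lra. }
    assert (Hg : g_lambda l y * Il = Rpower x l).
    { unfold g_lambda, Il. rewrite (Rplus_comm l y). rewrite <- Hxy. field. lra. }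
    set (g := g_lambda l y) in *.
    assert (Hgpos : 0 < g).
    { unfold g, g_lambda. rewrite (Rplus_comm l y). pose proof (Rpow_pos y l).
      apply Rdiv_lt_0_compat; [apply Rmult_lt_0_compat|]; auto. }
    pose proof (Rpow_pos x l) as Hxl.
    assert (Hg1 : g <= 1) by nra.
    pose proof (fx_ge l f x Hl HB Hx) as Hfx. fold be in Hfx.
    apply Rmult_lt_compat_l with (r := g) in Hlt; auto.
    assert (g * (f x * 1 + be * (Il - Rpower x l * 1)) = g * f x + be * (Rpower x l - g * Rpower x l)) by (rewrite <- Hg; ring).
    nra.
Qed.
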